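(* Let $n\ge 2$, $m\in\{1,\dots,n-1\}$, $\sigma\in(0,1)$, and let $\Sigma$ be an $n\times n$ symmetric positive-definite matrix. Let $G_o=\mathcal{N}(0,\Sigma)$ and $G^{(1)}_{\mathrm{SSL}}=\mathcal{N}(0,\sigma\Sigma)$. For $\alpha>\beta>0$ satisfying $\alpha^m\beta^{n-m}=\sigma^n$, let $D=\mathrm{diag}(\alpha,\dots,\alpha,\beta,\dots,\beta)$ ($m$ entries $\alpha$, $n-m$ entries $\beta$) and $G_{\mathrm{SL}}=\mathcal{N}(0,\Sigma^{1/2}D\Sigma^{1/2})$. Then $$D_{\mathrm{KL}}(G_o\|G_{\mathrm{SL}})\ge D_{\mathrm{KL}}(G_o\|G^{(1)}_{\mathrm{SSL}}),$$ with equality iff $\alpha=\beta=\sigma$. Moreover, as $\beta\to 0$ with $\alpha$ determined by $\alpha^m\beta^{n-m}=\sigma^n$, $$\frac{D_{\mathrm{KL}}(G_o\|G_{\mathrm{SL}})}{D_{\mathrm{KL}}(G_o\|G^{(1)}_{\mathrm{SSL}})}\to\infty.$$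
   Context: $D_{\mathrm{KL}}$ denotes Kullback–Leibler divergence; $\Sigma^{1/2}$ is the symmetric positive-definite square root of $\Sigma$. The constraint $\alpha^m\beta^{n-m}=\sigma^n$ is equivalent to $\det(\Sigma^{1/2}D\Sigma^{1/2})=\det(\sigma\Sigma)$ (equal covariance-ellipsoid volume). *)

(* Defs.v *)
From HB Require Import structures.
From mathcomp Require Import all_boot all_order all_algebra.
From mathcomp Require Import all_classical all_reals all_analysis.
Set Implicit Arguments. Unset Strict Implicit. Unset Printing Implicit Defensive.
Import Order.TTheory GRing.Theory Num.Theory.
Local Open Scope ring_scope.

Definition spd (R : realType) (n : nat) (A : 'M[R]_n) : Prop :=
  A^T = A /\ forall v : 'rV[R]_n, v != 0 -> 0 < (v *m A *m v^T) 0 0.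

(* Kullback-Leibler divergence D_KL(N(0,S0) || N(0,S1)) between two centred
   nondegenerate Gaussians on R^n, given by its standard closed form
   1/2 [ tr(S1^{-1} S0) - n + ln(det S1 / det S0) ]. *)
Definition gaussKL (R : realType) (n : nat) (S0 S1 : 'M[R]_n) : R :=
  (\tr (invmx S1 *m S0) - n%:R + ln (\det S1 / \det S0)) / 2.

Definition diagAB (R : realType) (n m : nat) (alpha beta : R) : 'M[R]_n :=
  diag_mx (\row_(i < n) (if (i < m)%N then alpha else beta)).

(* alpha as a function of beta, from alpha^m beta^(n-m) = sigma^n. *)
Definition alpha_of (R : realType) (n m : nat) (sigma beta : R) : R :=
  powR (sigma ^+ n / beta ^+ (n - m)) (m%:R)^-1.

(* Main.v *)
Require Import Defs.
From HB Require Import structures.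
From mathcomp Require Import all_boot all_order all_algebra.
From mathcomp Require Import all_classical all_reals all_analysis.
From mathcomp Require Import ring lra zify.
Import Order.TTheory GRing.Theory Num.Theory.
Local Open Scope classical_set_scope.
Local Open Scope ring_scope.

Section Aux.
Variable R : realType.

Lemma sum_ite (n m : nat) (a b : R) : (m <= n)%N ->
  \sum_(i < n) (if (i < m)%N then a else b) = a *+ m + b *+ (n - m).
Proof.
move=> mn.
rewrite -(big_mkord xpredT (fun i => if (i < m)%N then a else b)).
rewrite (big_cat_nat (n:=m) (leq0n m) mn) /=.
rewrite (@eq_big_nat _ _ _ 0 m _ (fun=> a)); last by move=> i /andP[_ ->].
rewrite (@eq_big_nat _ _ _ m n _ (fun=> b)); last first.
  by move=> i /andP[]; rewrite leqNgt => /negbTE ->.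
by rewrite !sumr_const_nat subn0.
Qed.

Lemma prod_ite (n m : nat) (a b : R) : (m <= n)%N ->
  \prod_(i < n) (if (i < m)%N then a else b) = a ^+ m * b ^+ (n - m).
Proof.
move=> mn.
rewrite -(big_mkord xpredT (fun i => if (i < m)%N then a else b)).
rewrite (big_cat_nat (n:=m) (leq0n m) mn) /=.
rewrite (@eq_big_nat _ _ _ 0 m _ (fun=> a)); last by move=> i /andP[_ ->].
rewrite (@eq_big_nat _ _ _ m n _ (fun=> b)); last first.
  by move=> i /andP[]; rewrite leqNgt => /negbTE ->.
by rewrite !prodr_const_nat subn0.
Qed.

Lemma spd_unit n (A : 'M[R]_n) : spd A -> A \in unitmx.
Proof.
move=> [_ pos]; rewrite -row_free_unit -kermx_eq0.
apply/eqP/row_matrixP => i; rewrite row0.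
apply/eqP/negPn/negP => nz; have := pos _ nz.
by rewrite -row_mul mulmx_ker row0 mul0mx mxE ltxx.
Qed.

Lemma klD n m (Sh : 'M[R]_n) a b : (m <= n)%N -> Sh \in unitmx -> 0 < a -> 0 < b ->
  gaussKL (Sh *m Sh) (Sh *m diagAB n m a b *m Sh) =
  ((a^-1 *+ m + b^-1 *+ (n - m)) - n%:R + ln (a ^+ m * b ^+ (n - m))) / 2.
Proof.
move=> mn U a0 b0.
set D := diagAB n m a b; set E := diagAB n m a^-1 b^-1.
have DE : D *m E = 1%:M.
  apply/matrixP => i j; rewrite /D /E /diagAB mul_diag_mx !mxE.
  case: (i < m)%N; case: (i == j); rewrite ?mulr0 ?mulr1 ?divff ?mulfV //;
  by rewrite gt_eqF.
set S1 := Sh *m D *m Sh; set X := invmx Sh *m E *m invmx Sh.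
have S1X : S1 *m X = 1%:M.
  rewrite /S1 /X !mulmxA -[Sh *m D *m Sh *m invmx Sh]mulmxA mulmxV // mulmx1.
  by rewrite -(mulmxA Sh D E) DE mulmx1 mulmxV.
have [U1 _] := mulmx1_unit S1X.
have inv : invmx S1 = X.
  by rewrite -[RHS](mulKmx U1) S1X mulmx1.
rewrite /gaussKL inv /X -!mulmxA mulKmx // mxtrace_mulC -mulmxA mulmxV //.
rewrite mulmx1 mxtrace_diag.
rewrite (eq_bigr (fun i : 'I_n => if (i < m)%N then a^-1 else b^-1)); last first.
  by move=> i _; rewrite mxE.
rewrite sum_ite // /S1 !det_mulmx det_diag.
rewrite (eq_bigr (fun i : 'I_n => if (i < m)%N then a else b)); last first.
  by move=> i _; rewrite mxE.
rewrite prod_ite //.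
have dS : \det Sh != 0 by rewrite -unitfE -unitmxE.
congr (_ / 2); congr (_ + ln _).
by field.
Qed.

Lemma key n m (a b s : R) : (1 <= m)%N -> (m <= n - 1)%N -> 0 < b -> b < a -> 0 < s ->
  a ^+ m * b ^+ (n - m) = s ^+ n -> s^-1 *+ n < a^-1 *+ m + b^-1 *+ (n - m).
Proof.
move=> m1 mn b0 ba s0 P.
have a0 : 0 < a by apply: lt_trans ba.
have mn' : (m <= n)%N by rewrite (leq_trans mn) // leq_subr.
have n0 : (0 < n)%N by apply: leq_trans mn'.
set E := fun i : 'I_n => if (i < m)%N then a^-1 else b^-1.
have := @leif_AGM R 'I_n predT E.
rewrite /= card_ord.
have H : {in predT, forall i, 0 <= E i}.
  by move=> i _; rewrite /E; case: ifP => _; rewrite invr_ge0 ltW.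
move/(_ H)/lt_leif.
have -> : \prod_(i in predT) E i = (s ^+ n)^-1.
  by rewrite -P invfM -!exprVn -prod_ite.
have -> : \sum_(i in predT) E i = a^-1 *+ m + b^-1 *+ (n - m).
  by rewrite -sum_ite.
have jn : (n - 1 < n)%N by lia.
set i0 : 'I_n := Ordinal n0; set j0 : 'I_n := Ordinal jn.
have -> : [forall i in predT, forall j in predT, E i == E j] = false.
  apply/negP => /forallP /(_ i0) /implyP /(_ isT) /forallP /(_ j0) /implyP /(_ isT).
  rewrite /E /= m1 ltnNge mn /=.
  by move/eqP/invr_inj => ab; move: ba; rewrite ab ltxx.
move=> /= lt1.
rewrite -mulr_natr -ltr_pdivlMr ?ltr0n //.
rewrite ltNge; apply/negP => le1.
move: lt1; rewrite -exprVn ltNge => /negP; apply.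
apply: lerXn2r => //; rewrite ?nnegrE ?invr_ge0 ?ltW //.
by rewrite divr_gt0 ?ltr0n // ltr_wpDr ?mulrn_wge0 ?invr_ge0 ?ltW // pmulrn_lgt0 // invr_gt0.
Qed.

End Aux.

Theorem propositionD2 (R : realType) (n m : nat) (sigma : R)
    (Sigma Shalf : 'M[R]_n) :
  (2 <= n)%N -> (1 <= m)%N -> (m <= n - 1)%N ->
  0 < sigma -> sigma < 1 ->
  spd Sigma ->
  (* Shalf is the symmetric positive-definite square root of Sigma *)
  spd Shalf -> Shalf *m Shalf = Sigma ->
  (forall alpha beta : R, beta > 0 -> alpha > beta ->
     alpha ^+ m * beta ^+ (n - m) = sigma ^+ n ->
     gaussKL Sigma (Shalf *m diagAB n m alpha beta *m Shalf)
       >= gaussKL Sigma (sigma *: Sigma)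
     /\ (gaussKL Sigma (Shalf *m diagAB n m alpha beta *m Shalf)
           = gaussKL Sigma (sigma *: Sigma)
         <-> alpha = sigma /\ beta = sigma))
  /\
  ((fun beta : R =>
      gaussKL Sigma (Shalf *m diagAB n m (alpha_of n m sigma beta) beta *m Shalf)
      / gaussKL Sigma (sigma *: Sigma))
     @ 0^'+ --> +oo).
Proof.
move=> n2 m1 mn s0 s1 _ /spd_unit U <-.
have mn' : (m <= n)%N by rewrite (leq_trans mn) // leq_subr.
have Ss : sigma *: (Shalf *m Shalf) = Shalf *m diagAB n m sigma sigma *m Shalf.
  have -> : diagAB n m sigma sigma = sigma%:M.
    by apply/matrixP => i j; rewrite !mxE; case: ifP.
  by rewrite mul_mx_scalar scalemxAl.
rewrite Ss klD // -exprD subnKC //.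
rewrite -mulrnDr subnKC //.
have g0 : 0 < (sigma^-1 *+ n - n%:R + ln (sigma ^+ n)) / 2.
  rewrite divr_gt0 // lnXn //.
  have -> : sigma^-1 *+ n - n%:R + ln sigma *+ n = (sigma^-1 - 1 + ln sigma) *+ n.
    by rewrite mulrnDl mulrnBl.
  rewrite pmulrn_lgt0 ?(leq_trans _ n2) //.
  have : 1 - ln sigma < sigma^-1.
    have : ln sigma != 0 by rewrite lt_eqF // ln_lt0 // s0 s1.
    rewrite -oppr_eq0 => /expR_gt1Dx.
    by rewrite expRN lnK // posrE.
  lra.
split.
  move=> a b b0 ba P.
  have a0 : 0 < a by apply: lt_trans ba.
  have K := @key R n m a b sigma m1 mn b0 ba s0 P.
  rewrite klD ?P //.
  move: K; set u := sigma^-1 *+ n; set v := a^-1 *+ m + _; set L := ln _ => K.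
  split; first lra.
  split; first lra.
  by case=> ea eb; move: ba; rewrite ea eb ltxx.
move: g0; set g := (sigma^-1 *+ n - _ + _) / 2 => g0.
apply/cvgryPge => A.
set k := (n - m)%N.
have k0 : (0 < k)%N by rewrite /k; lia.
set c := A * g * 2 + n%:R - ln (sigma ^+ n).
have c1 : 0 < `|c| + 1 by rewrite ltr_wpDl.
have e0 : 0 < k%:R / (`|c| + 1) by rewrite divr_gt0 // ltr0n.
near=> b.
have b0 : 0 < b by near: b; exact: nbhs_right_gt.
have be : b < k%:R / (`|c| + 1) by near: b; exact: nbhs_right_lt.
set al := alpha_of n m sigma b.
have x0 : 0 < sigma ^+ n / b ^+ k by rewrite divr_gt0 // exprn_gt0.
have al0 : 0 < al by apply: powR_gt0.
have P : al ^+ m * b ^+ k = sigma ^+ n.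
  rewrite /al /alpha_of -powR_mulrn ?ltW // -powRrM mulVf ?pnatr_eq0 -?lt0n //.
  by rewrite powRr1 ?ltW // divfK // expf_neq0 // gt_eqF.
rewrite klD // P ler_pdivlMr //.
have h1 : `|c| + 1 < b^-1 *+ k.
  rewrite -mulr_natl ltr_pdivlMr // mulrC -ltr_pdivlMr //.
have h2 : c <= `|c| := ler_norm c.
have h3 : 0 <= al^-1 *+ m by rewrite mulrn_wge0 // invr_ge0 ltW.
move: h1 h2 h3; rewrite /c.
set u := b^-1 *+ k; set v := al^-1 *+ m; set L := ln _; set w := `|_|.
move=> h1 h2 h3.
have : 0 <= v * 1 by lra.
nra.
Unshelve. all: by end_near.
Qed.
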